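(* There is a universal constant $C>0$ such that the following holds. Let $(\pi,Q)$ and $(\tilde\pi,\tilde Q)$ be two reversible Markov generators (with their stationary distributions) on a finite set $\Omega$, let $\mathcal W$ be a $(Q,\tilde Q)$-flow, and suppose $\pi(\omega)\le a\,\tilde\pi(\omega)$ for all $\omega\in\Omega$, for some $a>0$. Suppose $(\Omega,\tilde\pi,\tilde Q)$ satisfies the MLSI with constant $\tilde\alpha(\tilde Q)$. Then for every $r\ge2$, the $r$-regularized MLSI constant $\alpha_r(Q)$ of $(\Omega,\pi,Q)$ (the smallest constant in the $r$-regularized MLSI) satisfies $$\alpha_r(Q)\le C\,a\,A(\mathcal W,r)\,\tilde\alpha(\tilde Q),$$ where $$A(\mathcal W,r):=\max_{(\omega,\omega'):\,\omega\ne\omega',\,Q(\omega,\omega')>0}\frac{1}{\pi(\omega)Q(\omega,\omega')}\sum_{\mathcal P\in\Gamma(Q,\tilde Q):\,(\omega,\omega')\in\mathcal P}\mathcal W(\mathcal P)\big(1+(|\mathcal P|-1)^2\log r\big),$$ $|\mathcal P|$ is the length (number of steps) of $\mathcal P$, and $(\omega,\omega')\in\mathcal P$ means that $\omega,\omega'$ are consecutive vertices of $\mathcal P$.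
   Context: For a positive function $f$, ${\rm Ent}_\pi(f):=\mathbb E_\pi[f(\log f-\log\mathbb E_\pi f)]$, $\mathcal E_\pi(\log f,f):=\frac12\sum_{\omega,\omega'}\pi(\omega)Q(\omega,\omega')(f(\omega)-f(\omega'))\log\frac{f(\omega)}{f(\omega')}$ (analogously for $(\tilde\pi,\tilde Q)$). MLSI with constant $\alpha$: ${\rm Ent}_\pi(f)\le\alpha\,\mathcal E_\pi(\log f,f)$ for all $f:\Omega\to(0,\infty)$. The graph induced by $Q$ on $\Omega$ joins distinct $\omega,\omega'$ iff $Q(\omega,\omega')\ne0$, with graph distance ${\rm dist}$. A function $f>0$ is $r$-regular if $f(\omega)/f(\omega')\le r^{{\rm dist}(\omega,\omega')}$ for all $\omega,\omega'$; the $r$-regularized MLSI with constant $\alpha_r$ means ${\rm Ent}_\pi(f)\le\alpha_r\mathcal E_\pi(\log f,f)$ for all $r$-regular $f$. For $x,y$ with $\tilde Q(x,y)>0$, $\mathcal P_{x,y}$ is the set of paths $x_0=x,x_1,\dots,x_k=y$ ($k\ge1$) with $Q(x_i,x_{i+1})>0$ for all $i$; $\Gamma(Q,\tilde Q):=\bigcup_{x,y:\tilde Q(x,y)>0}\mathcal P_{x,y}$. A $(Q,\tilde Q)$-flow is a function $\mathcal W:\Gamma(Q,\tilde Q)\to[0,1]$ with $\sum_{P\in\mathcal P_{x,y}}\mathcal W(P)=\tilde\pi(x)\tilde Q(x,y)$ for all $x,y$ with $\tilde Q(x,y)>0$. *)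

(* Defs.v *)
From HB Require Import structures.
From mathcomp Require Import all_boot all_order all_algebra.
From mathcomp Require Import all_classical all_reals all_analysis.
Set Implicit Arguments. Unset Strict Implicit. Unset Printing Implicit Defensive.
Import Order.TTheory GRing.Theory Num.Theory.
Local Open Scope classical_set_scope.
Local Open Scope ring_scope.

Section Defs.
Variables (R : realType) (T : finType).

Definition rev_generator (pi : T -> R) (Q : T -> T -> R) : Prop :=
  [/\ (forall x, 0 < pi x), \sum_(x : T) pi x = 1,
      (forall x y, x != y -> 0 <= Q x y),
      (forall x, \sum_(y : T) Q x y = 0) &
      (forall x y, pi x * Q x y = pi y * Q y x)].

Definition expect (pi : T -> R) (f : T -> R) : R := \sum_(x : T) pi x * f x.

Definition Ent (pi : T -> R) (f : T -> R) : R :=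
  \sum_(x : T) pi x * (f x * (ln (f x) - ln (expect pi f))).

Definition Dir (pi : T -> R) (Q : T -> T -> R) (f : T -> R) : R :=
  2^-1 * \sum_(x : T) \sum_(y : T)
     pi x * Q x y * ((f x - f y) * ln (f x / f y)).

Definition MLSI (pi : T -> R) (Q : T -> T -> R) (alpha : R) : Prop :=
  forall f : T -> R, (forall x, 0 < f x) -> Ent pi f <= alpha * Dir pi Q f.

Definition adjQ (Q : T -> T -> R) : rel T := fun u v => (u != v) && (Q u v != 0).

Definition walk_len (Q : T -> T -> R) (k : nat) (x y : T) : Prop :=
  exists s : seq T, [/\ size s = k, path (adjQ Q) x s & last x s = y].

(* f is r-regular: f x / f y <= r ^ dist(x,y) for all x y
   (equivalently, for r >= 1, <= r^k for every walk length k) *)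
Definition regular (Q : T -> T -> R) (r : R) (f : T -> R) : Prop :=
  forall x y k, walk_len Q k x y -> f x / f y <= r ^+ k.

Definition MLSI_reg (pi : T -> R) (Q : T -> T -> R) (r alpha : R) : Prop :=
  forall f : T -> R, (forall x, 0 < f x) -> regular Q r f ->
    Ent pi f <= alpha * Dir pi Q f.

Definition alpha_reg (pi : T -> R) (Q : T -> T -> R) (r : R) : \bar R :=
  ereal_inf [set x%:E | x in [set alpha | MLSI_reg pi Q r alpha]].

Definition isPath (Q : T -> T -> R) (x y : T) (p : seq T) : bool :=
  match p with
  | [::] => false
  | x0 :: s => [&& x0 == x, s != [::], last x0 s == y &
                  path (fun u v => 0 < Q u v) x0 s]
  end.

Definition Gamma (Q Qt : T -> T -> R) : set (seq T) :=
  [set p | exists x y, 0 < Qt x y /\ isPath Q x y p].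

Definition plen (p : seq T) : nat := (size p).-1.

Definition edge_in (w w' : T) (p : seq T) : bool := (w, w') \in zip p (behead p).

Definition is_flow (pit : T -> R) (Q Qt : T -> T -> R) (W : seq T -> R) : Prop :=
  (forall p, Gamma Q Qt p -> 0 <= W p <= 1) /\
  (forall x y, 0 < Qt x y ->
     (\esum_(p in [set p | isPath Q x y p]) (W p)%:E = (pit x * Qt x y)%:E)%E).

Definition Aflow (pi : T -> R) (Q Qt : T -> T -> R) (W : seq T -> R) (r : R)
  : \bar R :=
  (\big[maxe/-oo]_(e : T * T | (e.1 != e.2) && (0 < Q e.1 e.2)%R)
     ((pi e.1 * Q e.1 e.2)^-1%:E *
      \esum_(p in [set p | Gamma Q Qt p /\ edge_in e.1 e.2 p])
         (W p * (1 + ((plen p)%:R - 1) ^+ 2 * ln r))%:E))%E.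

End Defs.

(* Main.v *)
Require Import Defs.
From HB Require Import structures.
From mathcomp Require Import all_boot all_order all_algebra.
From mathcomp Require Import all_classical all_reals all_analysis.
From mathcomp Require Import ring lra zify.
Import Order.TTheory GRing.Theory Num.Theory.
Local Open Scope classical_set_scope.
Local Open Scope ring_scope.
Set Implicit Arguments. Unset Strict Implicit. Unset Printing Implicit Defensive.

Section Reals.
Variable R : realType.
Implicit Types u v x : R.

Definition phi u v : R := (u - v) * ln (u / v).

Lemma ln_le_sub1 x : 0 < x -> ln x <= x - 1.
Proof.
move=> x0; have := @le_ln1Dx R (x - 1).
have -> : 1 + (x - 1) = x by ring.
apply; lra.
Qed.
Arguments ln_le_sub1 [x].

Lemma phi_sym u v : 0 < u -> 0 < v -> phi u v = phi v u.
Proof.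
move=> u0 v0; rewrite /phi -invf_div lnV ?posrE ?divr_gt0 //; ring.
Qed.

Lemma phi_ge0 u v : 0 < u -> 0 < v -> 0 <= phi u v.
Proof.
move=> u0 v0; rewrite /phi; have [uv|vu] := leP u v.
  apply: mulr_le0; first lra.
  by apply: ln_le0; rewrite ler_pdivrMr // mul1r.
apply: mulr_ge0; first lra.
by apply: ln_ge0; rewrite ler_pdivlMr // mul1r ltW.
Qed.

Lemma phi_lb u v : 0 < v -> v <= u -> (u - v) ^+ 2 <= u * phi u v.
Proof.
move=> v0 vu; have u0 : 0 < u by exact: (lt_le_trans v0 vu).
have h := ln_le_sub1 (divr_gt0 v0 u0).
rewrite -invf_div lnV ?posrE ?divr_gt0 // in h.
have e : u * (v / u) = v by rewrite mulrCA divff ?gt_eqF // mulr1.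
rewrite /phi.
have : u * ((u - v) * (1 - v / u)) <= u * ((u - v) * ln (u / v)).
  rewrite ler_pM2l //; apply: ler_wpM2l; lra.
suff -> : u * ((u - v) * (1 - v / u)) = (u - v) ^+ 2 by [].
by rewrite mulrBr mulr1 mulrBr mulrA [u * (u - v)]mulrC -mulrA e; ring.
Qed.

Lemma phi_sqrt u v : 0 < u -> 0 < v ->
  (Num.sqrt u - Num.sqrt v) ^+ 2 <= phi u v.
Proof.
wlog vu : u v / v <= u.
  move=> H u0 v0; have [|uv] := leP v u; first by move=> ?; exact: H.
  rewrite phi_sym // -sqrrN opprB; apply: H => //; exact: ltW.
move=> u0 v0; set a := Num.sqrt u; set b := Num.sqrt v.
have a0 : 0 < a by rewrite sqrtr_gt0.
have b0 : 0 < b by rewrite sqrtr_gt0.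
have ua : u = a ^+ 2 by rewrite sqr_sqrtr // ltW.
have vb : v = b ^+ 2 by rewrite sqr_sqrtr // ltW.
have ba : b <= a by rewrite /a /b ler_sqrt // ltW.
have h := @phi_lb _ _ v0 vu.
have h2 : a ^+ 2 * (a - b) ^+ 2 <= a ^+ 2 * phi u v.
  rewrite -ua; apply: le_trans h; rewrite ua vb -subr_ge0.
  have -> : (a ^+ 2 - b ^+ 2) ^+ 2 - a ^+ 2 * (a - b) ^+ 2
     = (a - b) ^+ 2 * (2 * a * b + b ^+ 2) by ring.
  apply: mulr_ge0; [exact: sqr_ge0|]; nra.
by rewrite ler_pM2l ?exprn_gt0 // in h2.
Qed.

Lemma phi_ub u v M : 0 < u -> u <= v -> ln (v / u) <= M ->
  phi u v <= (Num.sqrt v - Num.sqrt u) ^+ 2 * (M + 4).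
Proof.
move=> u0 uv hM; have v0 : 0 < v by exact: lt_le_trans u0 uv.
set a := Num.sqrt u; set b := Num.sqrt v.
have a0 : 0 < a by rewrite sqrtr_gt0.
have b0 : 0 < b by rewrite sqrtr_gt0.
have ua : u = a ^+ 2 by rewrite sqr_sqrtr // ltW.
have vb : v = b ^+ 2 by rewrite sqr_sqrtr // ltW.
have ab : a <= b by rewrite /a /b ler_sqrt // ltW.
set L := ln (v / u).
have L0 : 0 <= L by apply: ln_ge0; rewrite ler_pdivlMr // mul1r.
have hL : L = 2 * ln (b / a).
  by rewrite /L ua vb -expr_div_n lnXn ?divr_gt0 // mulr_natl.
have hl := ln_le_sub1 (divr_gt0 b0 a0).
have e : a * (b / a) = b by rewrite mulrCA divff ?gt_eqF // mulr1.
have haL : a * L <= 2 * (b - a).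
  rewrite hL; have : a * ln (b / a) <= a * (b / a - 1) by rewrite ler_pM2l.
  rewrite mulrBr e mulr1; lra.
rewrite phi_sym // /phi -/L ua vb.
have h1 : 0 <= (b - a) * (2 * (b - a) - a * L) by apply: mulr_ge0; lra.
have h2 : 0 <= (b - a) ^+ 2 * (M - L).
  apply: mulr_ge0; first exact: sqr_ge0.
  by rewrite subr_ge0.
nra.
Qed.

End Reals.
Arguments phi {R}.
Definition pairs {A : Type} (l : seq A) := zip l (behead l).

Lemma pairs_cons2 {A : Type} (a b : A) l : pairs [:: a, b & l] = (a, b) :: pairs (b :: l).
Proof. by []. Qed.

Lemma pairs_consS {A : eqType} (a : A) l : {subset pairs l <= pairs (a :: l)}.
Proof. by case: l => [|b l] //= z; rewrite inE => ->; rewrite orbT. Qed.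

Lemma pairs_cat {A : eqType} (l1 l2 : seq A) : {subset pairs l2 <= pairs (l1 ++ l2)}.
Proof.
elim: l1 => [|a l1 IH] //= z /IH; exact: pairs_consS.
Qed.

Lemma path_pairs {A : Type} (e : rel A) x s :
  path e x s = all (fun q => e q.1 q.2) (pairs (x :: s)).
Proof. by elim: s x => [|y s IH] x //=; rewrite IH. Qed.

Lemma shorten_ex {A : eqType} (l : seq A) (x0 : A) :
  exists l', head x0 l' = head x0 l /\ last x0 l' = last x0 l /\ uniq l' /\
    (size l' <= size l)%N /\ (l' = [::] -> l = [::]) /\
    {subset pairs l' <= pairs l}.
Proof.
elim: l => [|y t [t' [hh [hl [hu [hs [hn hp]]]]]]].
  by exists [::].
have tn : t = [::] -> t' = [::].
  by move=> E; apply/nilP; rewrite /nilp -leqn0 (leq_trans hs) // E.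
case: (boolP (y \in t')) => yt.
  case/splitPr: yt hh hl hu hs hn hp tn => p1 p2 hh hl hu hs hn hp tn.
  exists (y :: p2); do !split => //.
  - have tnn : t != [::].
      by apply/eqP => E; have := tn E; case: p1 {hh hl hu hs hn hp tn}.
    move: hl; rewrite last_cat /= => ->; case: t tnn {tn hn hs hh hp} => //.
  - by move: hu; rewrite cat_uniq => /and3P[].
  - by move: hs; rewrite /= size_cat /=; lia.
  - move=> z hz; apply: pairs_consS; apply: hp; exact: pairs_cat.
exists (y :: t'); do !split => //.
- case: t' hl hn tn {hh hu hs hp yt} => [|a t'] hl hn tn /=.
    by rewrite hn.
  by case: t hl hn tn => [_ _ /(_ erefl)|b t] //= hl.
- by rewrite /= yt.
- move=> z; case: t' hh hn tn hp {hl hu hs yt} => [|a t'] hh hn tn hp //.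
  case: t hh hn tn hp => [_ _ /(_ erefl)|b t] //= hh hn tn hp.
  rewrite inE => /orP[/eqP ->|hz]; first by rewrite hh inE eqxx.
  by rewrite inE; apply/orP; right; apply: hp.
Qed.

Lemma uniq_pairs {A : eqType} (l : seq A) : uniq l -> uniq (pairs l).
Proof.
case: l => [|a l] //= /andP[_ u].
have : uniq (unzip2 (zip (a :: l) l)) by rewrite unzip2_zip //=.
exact: map_uniq.
Qed.

Section CS.
Variable R : realFieldType.

Lemma cs_aux {A : Type} (h : A -> R) (s : seq A) (c : R) :
  2 * c * \sum_(e <- s) h e <= \sum_(e <- s) h e ^+ 2 + (size s)%:R * c ^+ 2.
Proof.
elim: s => [|a s IH]; first by rewrite !big_nil mul0r mulr0 addr0.
rewrite !big_cons /= -[(size s).+1]addn1 natrD.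
have : 0 <= (h a - c) ^+ 2 by exact: sqr_ge0.
lra.
Qed.

Lemma cs_seq {A : Type} (h : A -> R) (s : seq A) :
  (\sum_(e <- s) h e) ^+ 2 <= (size s)%:R * \sum_(e <- s) h e ^+ 2.
Proof.
elim: s => [|a s IH]; first by rewrite !big_nil expr0n /= mul0r.
rewrite !big_cons /= -[(size s).+1]addn1 natrD.
have := cs_aux h s (h a).
have : 0 <= (size s)%:R :> R by [].
nra.
Qed.

Lemma telescope {A : Type} (g : A -> R) x s :
  g (last x s) - g x = \sum_(e <- pairs (x :: s)) (g e.2 - g e.1).
Proof.
elim: s x => [|y s IH] x /=; first by rewrite big_nil subrr.
rewrite big_cons /= -IH; ring.
Qed.
End CS.

Section Graph.
Variables (R : realType) (T : finType).
Implicit Types (pi f : T -> R) (Q : T -> T -> R).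

Lemma Qdiag_le0 pi Q x : rev_generator pi Q -> Q x x <= 0.
Proof.
case=> _ _ Qge0 Qsum _; have := Qsum x; rewrite (bigD1 x) //=.
have : 0 <= \sum_(y | y != x) Q x y.
  by apply: sumr_ge0 => y yx; apply: Qge0; rewrite eq_sym.
lra.
Qed.

Lemma adjQ_sym pi Q u v : rev_generator pi Q -> adjQ Q u v = adjQ Q v u.
Proof.
case=> pi0 _ _ _ rev; rewrite /adjQ eq_sym; congr (_ && _).
have h := rev u v.
apply/idP/idP => /eqP H; apply/eqP => H'.
  by move: h; rewrite H' mulr0 => /eqP; rewrite mulf_eq0 (gt_eqF (pi0 u)) /= => /eqP.
by move: h; rewrite H' mulr0 => /esym /eqP; rewrite mulf_eq0 (gt_eqF (pi0 v)) /= => /eqP.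
Qed.

Lemma pos_adj pi Q u v : rev_generator pi Q -> 0 < Q u v -> adjQ Q u v.
Proof.
move=> hg huv; rewrite /adjQ (gt_eqF huv) andbT.
by apply/eqP => E; move: huv; rewrite E => /lt_le_trans/(_ (Qdiag_le0 v hg)); rewrite ltxx.
Qed.

Lemma walk_rev pi Q k x y : rev_generator pi Q -> walk_len Q k x y -> walk_len Q k y x.
Proof.
move=> hg [s [hs hp hl]]; exists (rev (belast x s)); split.
- by rewrite size_rev size_belast.
- rewrite -hl rev_path; move: hp; apply: sub_path => u v /=.
  by rewrite (adjQ_sym _ _ hg).
- case: s hs hp hl => [|a s] _ _ /= hl; first by rewrite hl.
  by rewrite rev_cons last_rcons.
Qed.

Lemma reg_ln Q r f x y k : 1 <= r -> (forall z, 0 < f z) -> regular Q r f ->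
  walk_len Q k x y -> ln (f x / f y) <= k%:R * ln r.
Proof.
move=> r1 f0 hr hw; have := hr _ _ _ hw.
rewrite -ler_ln ?posrE ?divr_gt0 ?exprn_gt0 //; last exact: lt_le_trans r1.
by rewrite lnXn ?mulr_natl //; exact: lt_le_trans r1.
Qed.

Lemma num_bound (kp kk L L0 : R) : 2 <= kp -> kp <= kk -> 0 < L0 -> L0 <= L ->
  kp * (kp * L + 4) <= (5 + 8 / L0) * (1 + (kk - 1) ^+ 2 * L).
Proof.
move=> k2 kk' L00 L0L.
have c0 : 8 / L0 * L0 = 8 by rewrite mulfVK ?gt_eqF.
have c1 : 0 <= 8 / L0 by rewrite divr_ge0 // ltW.
have h1 : kp ^+ 2 <= 4 * (kk - 1) ^+ 2 by nra.
have h2 : 4 * kp <= 8 * (kk - 1) ^+ 2 by nra.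
have h3 : 8 * (kk - 1) ^+ 2 <= 8 / L0 * ((kk - 1) ^+ 2 * L).
  have e : 8 / L0 * ((kk - 1) ^+ 2 * L) - 8 * (kk - 1) ^+ 2
        = 8 / L0 * ((kk - 1) ^+ 2 * (L - L0)) by rewrite -{2}c0; ring.
  have : 0 <= 8 / L0 * ((kk - 1) ^+ 2 * (L - L0)).
    by apply: mulr_ge0 => //; apply: mulr_ge0; [exact: sqr_ge0|lra].
  lra.
have h4 : 0 <= (kk - 1) ^+ 2 * L by apply: mulr_ge0; [exact: sqr_ge0|lra].
have h5 : kp ^+ 2 * L <= 4 * (kk - 1) ^+ 2 * L by apply: ler_wpM2r => //; lra.
nra.
Qed.

End Graph.

Section PathBound.
Variables (R : realType) (T : finType).
Implicit Types (pi f : T -> R) (Q : T -> T -> R).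

Definition C0 : R := 5 + 8 / ln 2.

Definition omega (r : R) (p : seq T) : R := 1 + ((plen p)%:R - 1) ^+ 2 * ln r.

Definition Epath f (p : seq T) : R :=
  \sum_(e : T * T | edge_in e.1 e.2 p) phi (f e.1) (f e.2).

Lemma Epath_ge0 f p : (forall z, 0 < f z) -> 0 <= Epath f p.
Proof. by move=> f0; apply: sumr_ge0 => e _; apply: phi_ge0. Qed.

Lemma ln2_gt0 : 0 < ln (2 : R).
Proof. by apply: ln_gt0; lra. Qed.

Lemma C0_omega_ge1 r p : 2 <= r -> 1 <= C0 * omega r p.
Proof.
move=> r2; have L0 := ln2_gt0.
have Lr : 0 <= ln r by apply: ln_ge0; lra.
have c1 : 0 <= 8 / ln (2 : R) by rewrite divr_ge0 // ltW.
have h : 0 <= ((plen p)%:R - 1) ^+ 2 * ln r by apply: mulr_ge0 => //; exact: sqr_ge0.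
rewrite /C0 /omega; nra.
Qed.

Lemma path_bound pi Q f r x y p : rev_generator pi Q -> (forall z, 0 < f z) ->
  regular Q r f -> 2 <= r -> isPath Q x y p -> x != y ->
  phi (f x) (f y) <= C0 * omega r p * Epath f p.
Proof.
move=> hg f0 hreg r2; case: p => [|x0 s] //= /and4P[/eqP-> sn /eqP hy hpath] xy.
have r1 : 1 <= r by lra.
have [l' [hh [hl [hu [hs [hn hp]]]]]] := shorten_ex (x :: s) x.
case: l' hh hl hu hs hn hp => [|a s']; first by move=> _ _ _ _ /(_ erefl).
move=> /= -> {a} hl hu hs _ hp; rewrite ltnS in hs.
have hpath' : path (fun u v => 0 < Q u v) x s'.
  rewrite path_pairs; apply/allP => z /hp hz.
  by move: hpath; rewrite path_pairs => /allP; apply.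
have hw : walk_len Q (size s') x y.
  exists s'; split => //; last by rewrite hl.
  by move: hpath'; apply: sub_path => u v /=; apply: pos_adj hg.
have hw' := walk_rev hg hw.
set k := size s'.
set S := \sum_(e <- pairs (x :: s')) phi (f e.1) (f e.2).
have hSE : S <= Epath f (x :: s).
  rewrite /S big_uniq; last exact: uniq_pairs.
  rewrite /Epath [X in _ <= X]big_mkcond [X in X <= _]big_mkcond /=.
  apply: ler_sum => -[u v] _ /=.
  case: ifP => h; first by rewrite /edge_in (hp _ h).
  by case: ifP => _ //; apply: phi_ge0.
have hE0 := Epath_ge0 (x :: s) f0.
have hC := C0_omega_ge1 (x :: s) r2.
set g := fun z => Num.sqrt (f z).
have hCS : (g y - g x) ^+ 2 <= k%:R * S.
  rewrite -hy -hl telescope; apply: le_trans (cs_seq _ _) _.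
  rewrite /pairs size_zip /= (minn_idPr (leqnSn _)); apply: ler_wpM2l => //.
  apply: ler_sum => -[u v] _ /=; rewrite -sqrrN opprB; exact: phi_sqrt.
have hub : phi (f x) (f y) <= (g y - g x) ^+ 2 * (k%:R * ln r + 4).
  have [fxy|fyx] := leP (f x) (f y).
    apply: phi_ub => //; exact: reg_ln hreg hw'.
  rewrite phi_sym // -sqrrN opprB; apply: phi_ub => //; first exact: ltW.
  exact: reg_ln hreg hw.
have hS0 : 0 <= S by apply: sumr_ge0 => e _; apply: phi_ge0.
case: s' hl hu hp hs hpath' hw hw' @k @S hCS hub hSE hS0 => [|b [|c s']].
- by move=> /= hl; move: xy; rewrite hl hy eqxx.
- move=> /= hl _ _ _ _ _ _ hCS hub hSE hS0.
  have eS : \sum_(e <- pairs [:: x; b]) phi (f e.1) (f e.2) = phi (f x) (f y).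
    by rewrite /= big_cons big_nil addr0 /= hl hy.
  rewrite eS in hSE; apply: le_trans hSE _.
  by rewrite -{1}[Epath _ _]mul1r; apply: ler_wpM2r.
move=> hl _ _ hs _ _ _ k S hCS hub hSE hS0.
set kp : R := k%:R.
have kp2 : 2 <= kp by rewrite /kp /k /= ler_nat.
have kpk : kp <= (size s)%:R by rewrite /kp ler_nat.
have Lr : ln 2 <= ln r by rewrite ler_ln ?posrE //; lra.
have hnum := num_bound kp2 kpk ln2_gt0 Lr.
have hL0 : 0 <= ln r by apply: ln_ge0.
apply: le_trans hub _.
apply: le_trans (_ : kp * S * (kp * ln r + 4) <= _).
  by apply: ler_wpM2r => //; nra.
apply: le_trans (_ : kp * (kp * ln r + 4) * Epath f (x :: s) <= _).
  rewrite mulrAC; apply: ler_wpM2l; last exact: hSE.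
  by apply: mulr_ge0; nra.
by apply: ler_wpM2r.
Qed.

End PathBound.
Arguments C0 {R}.

Section Entropy.
Variables (R : realType) (T : finType).
Implicit Types (pi f : T -> R) (Q : T -> T -> R).

Definition psi (u c : R) : R := u * (ln u - ln c) - u + c.

Lemma psi_ge0 u c : 0 < u -> 0 < c -> 0 <= psi u c.
Proof.
move=> u0 c0; have h := ln_le_sub1 (divr_gt0 c0 u0).
rewrite ln_div ?posrE // in h.
have : u * (ln c - ln u) <= u * (c / u - 1) by rewrite ler_pM2l.
rewrite !mulrBr mulr1 [u * (c / u)]mulrCA divff ?gt_eqF // mulr1 /psi.
lra.
Qed.

Lemma psi_gt0 u c : 0 < u -> 0 < c -> u != c -> 0 < psi u c.
Proof.
move=> u0 c0 uc.
have hne : ln (c / u) != 0.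
  rewrite ln_eq0 ?divr_gt0 //; apply: contra uc => /eqP h.
  have e : c = c / u * u by rewrite divfK ?gt_eqF.
  by apply/eqP; rewrite e h mul1r.
have h := expR_gt1Dx hne; rewrite lnK ?posrE ?divr_gt0 // in h.
rewrite ln_div ?posrE // in h.
have : u * (1 + (ln c - ln u)) < u * (c / u) by rewrite ltr_pM2l.
rewrite mulrDr mulr1 [u * (c / u)]mulrCA divff ?gt_eqF // mulr1 /psi.
lra.
Qed.

Lemma psi_diag u : psi u u = 0.
Proof. by rewrite /psi subrr mulr0 sub0r addNr. Qed.

Lemma expect_gt0 pi f : (forall x, 0 < pi x) -> \sum_x pi x = 1 ->
  (forall x, 0 < f x) -> 0 < expect pi f.
Proof.
move=> pi0 s1 f0; rewrite /expect.
have [x0 _] : exists x : T, true.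
  case: (pickP (fun _ : T => true)) => [x _|h]; first by exists x.
  by move: s1; rewrite big_pred0 // => /eqP; rewrite eq_sym oner_eq0.
rewrite (bigD1 x0) //=; apply: ltr_pwDl; first exact: mulr_gt0.
by apply: sumr_ge0 => x _; apply: mulr_ge0; apply: ltW.
Qed.

Lemma ent_eq pi f c : \sum_x pi x = 1 ->
  \sum_x pi x * psi (f x) c = Ent pi f + psi (expect pi f) c.
Proof.
move=> s1; set m := expect pi f.
apply/eqP; rewrite addrC -subr_eq; apply/eqP.
rewrite /Ent -sumrB.
have -> : \sum_x (pi x * psi (f x) c - pi x * (f x * (ln (f x) - ln m)))
   = \sum_x (pi x * f x * (ln m - ln c) - pi x * f x + c * pi x).
  by apply: eq_bigr => x _; rewrite /psi; ring.
rewrite big_split big_split /= -mulr_suml sumrN -mulr_sumr s1 -/(expect pi f) -/m.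
by rewrite /psi; ring.
Qed.

Lemma ent_le pi f c : (forall x, 0 < pi x) -> \sum_x pi x = 1 ->
  (forall x, 0 < f x) -> 0 < c ->
  Ent pi f <= \sum_x pi x * psi (f x) c.
Proof.
move=> pi0 s1 f0 c0; rewrite ent_eq //; rewrite lerDl; apply: psi_ge0 => //.
exact: expect_gt0.
Qed.

Lemma ent_ge0 pi f : (forall x, 0 < pi x) -> \sum_x pi x = 1 ->
  (forall x, 0 < f x) -> 0 <= Ent pi f.
Proof.
move=> pi0 s1 f0; have := @ent_eq pi f (expect pi f) s1.
rewrite psi_diag addr0 => <-; apply: sumr_ge0 => x _.
apply: mulr_ge0; first exact: ltW.
by apply: psi_ge0 => //; exact: expect_gt0.
Qed.

Lemma ent_compare pi pit f a : (forall x, 0 < pi x) -> \sum_x pi x = 1 ->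
  (forall x, 0 < pit x) -> \sum_x pit x = 1 ->
  (forall x, 0 < f x) -> (forall w, pi w <= a * pit w) ->
  Ent pi f <= a * Ent pit f.
Proof.
move=> pi0 s1 pit0 st1 f0 hpa.
have m0 := expect_gt0 pit0 st1 f0.
apply: le_trans (ent_le pi0 s1 f0 m0) _.
have := @ent_eq pit f (expect pit f) st1; rewrite psi_diag addr0 => <-.
rewrite mulr_sumr; apply: ler_sum => x _; rewrite mulrA.
by apply: ler_wpM2r => //; apply: psi_ge0.
Qed.

Lemma ent_pos pi (x y : T) : (forall x, 0 < pi x) -> \sum_x pi x = 1 -> x != y ->
  exists f, (forall z, 0 < f z) /\ 0 < Ent pi f.
Proof.
move=> pi0 s1 xy.
pose f z : R := if z == x then 2 else 1.
have f0 : forall z, 0 < f z by move=> z; rewrite /f; case: ifP.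
exists f; split => //.
have := @ent_eq pi f (expect pi f) s1; rewrite psi_diag addr0 => <-.
have m0 := expect_gt0 pi0 s1 f0.
have hz : exists z, f z != expect pi f.
  case: (eqVneq (f x) (expect pi f)) => [e|ne]; last by exists x.
  have yx : (y == x) = false by rewrite eq_sym (negPf xy).
  exists y; rewrite -e /f eqxx yx; apply/eqP => h; lra.
case: hz => z hz.
rewrite (bigD1 z) //=; apply: ltr_pwDl.
  by apply: mulr_gt0 => //; apply: psi_gt0.
by apply: sumr_ge0 => w _; apply: mulr_ge0; [exact: ltW|apply: psi_ge0].
Qed.

End Entropy.

Section Esum.
Variables (R : realType) (U : choiceType).
Local Open Scope ereal_scope.
Local Open Scope classical_set_scope.

Lemma esumZT (a : U -> \bar R) (r : R) : (0 <= r)%R -> (forall i, 0 <= a i) ->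
  \esum_(i in [set: U]) (r%:E * a i) = r%:E * \esum_(i in [set: U]) a i.
Proof.
move=> r0 a0; rewrite /esum -ereal_supZl //; last first.
  by apply/set0P; exists (\sum_(x \in set0) a x); exists set0 => //; exact: fsets_set0.
rewrite image_comp; congr ereal_sup; apply: eq_imagel => A _ /=.
by rewrite ge0_mule_fsumr.
Qed.

Lemma esumZ (I : set U) (a : U -> \bar R) (r : R) : (0 <= r)%R ->
  (forall i, I i -> 0 <= a i) ->
  \esum_(i in I) (r%:E * a i) = r%:E * \esum_(i in I) a i.
Proof.
move=> r0 a0; rewrite esum_mkcond [X in _ = _ * X]esum_mkcond -esumZT //.
  by apply: eq_esum => i _; case: ifP => // _; rewrite mule0.
by move=> i; case: ifP => // /set_mem /a0.
Qed.

Lemma disj_sum (J : finType) (g : U -> \bar R) (B : J -> set U) (G : set U) :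
  (forall q, B q `<=` G) -> (forall p q q', B q p -> B q' p -> q = q') ->
  (forall p, G p -> 0 <= g p) ->
  \sum_(q : J) \esum_(p in B q) g p <= \esum_(p in G) g p.
Proof.
move=> BG Bu g0.
have e : forall q, \esum_(p in B q) g p = \esum_(p in G) (if p \in B q then g p else 0).
  move=> q; rewrite -esum_mkcondr; congr esum.
  by apply/esym; first [apply/setIidr|apply/setIidl]; apply: BG.
under eq_bigr do rewrite e.
rewrite -esum_sum; last by move=> p q Gp _; case: ifP => // _; apply: g0.
apply: le_esum => p Gp.
case: (pickP (fun q => p \in B q)) => [q0 hq0|h].
  rewrite (bigD1 q0) //= hq0 big1 ?adde0 //.
  move=> q /negPf qq; case: ifP => // hq.
  by move: qq; rewrite (Bu p q q0) ?eqxx //; apply: set_mem.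
rewrite big1; first exact: g0.
by move=> q _; rewrite h.
Qed.

End Esum.

Section DirComp.
Variables (R : realType) (T : finType).
Implicit Types (pi f : T -> R) (Q : T -> T -> R).

Definition D2 pi Q f : R :=
  \sum_(q : T * T) pi q.1 * Q q.1 q.2 * phi (f q.1) (f q.2).

Lemma Dir_D2 pi Q f : Dir pi Q f = 2^-1 * D2 pi Q f.
Proof. by rewrite /Dir pair_big. Qed.

Lemma phi_diag (u : R) : phi u u = 0.
Proof. by rewrite /phi subrr mul0r. Qed.

Lemma D2_ge0 pi Q f : rev_generator pi Q -> (forall z, 0 < f z) -> 0 <= D2 pi Q f.
Proof.
move=> hg f0; apply: sumr_ge0 => -[x y] _ /=.
case: (eqVneq x y) => [->|xy]; first by rewrite phi_diag mulr0.
case: hg => pi0 _ Qge0 _ _.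
apply: mulr_ge0; first by apply: mulr_ge0; [exact: ltW|exact: Qge0].
exact: phi_ge0.
Qed.

Lemma D2_zero pi Q f : (forall x y, x != y -> Q x y = 0) -> D2 pi Q f = 0.
Proof.
move=> hQ; apply: big1 => -[x y] _ /=.
case: (eqVneq x y) => [->|xy]; first by rewrite phi_diag mulr0.
by rewrite hQ // mulr0 mul0r.
Qed.

Lemma isPath_pos Q x y p u v : isPath Q x y p -> edge_in u v p -> 0 < Q u v.
Proof.
case: p => [|x0 s] //= /and4P[_ _ _ hp] he.
by move: hp; rewrite path_pairs => /allP /(_ _ he).
Qed.

Lemma isPath_uniq Q x y x' y' p : isPath Q x y p -> isPath Q x' y' p -> x = x' /\ y = y'.
Proof.
case: p => [|x0 s] //= /and4P[/eqP <- _ /eqP <- _] /and4P[/eqP <- _ /eqP <- _].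
by [].
Qed.

Local Open Scope ereal_scope.

Lemma edge_bound pi Q Qt W r A u v : (u != v) -> (0 < Q u v)%R ->
  (forall z, 0 < pi z)%R ->
  Aflow pi Q Qt W r = A%:E ->
  \esum_(p in [set p | Gamma Q Qt p /\ edge_in u v p]) (W p * omega r p)%:E
    <= (A * (pi u * Q u v))%:E.
Proof.
move=> uv Quv pi0 hA.
have hpq : (0 < pi u * Q u v)%R by apply: mulr_gt0.
have := @le_bigmax_cond _ _ _ (-oo) (u, v)
  (fun e : T * T => (e.1 != e.2) && (0 < Q e.1 e.2)%R)
  (fun e : T * T => ((pi e.1 * Q e.1 e.2)^-1%:E *
      \esum_(p in [set p | Gamma Q Qt p /\ edge_in e.1 e.2 p])
         (W p * (1 + ((plen p)%:R - 1) ^+ 2 * ln r))%:E)).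
rewrite /= uv Quv => /(_ erefl).
rewrite -/(Aflow pi Q Qt W r) hA /=.
set S := esum _ _ => h.
have -> : S = (pi u * Q u v)%:E * ((pi u * Q u v)^-1%:E * S).
  by rewrite muleA -EFinM divff ?gt_eqF // mul1e.
rewrite [(A * _)%:E]EFinM [X in X <= _]muleC; apply: lee_wpmul2r => //.
by rewrite lee_fin; exact: ltW.
Qed.

End DirComp.

Section PairBound.
Variables (R : realType) (T : finType).
Implicit Types (pi f : T -> R) (Q : T -> T -> R).
Local Open Scope ereal_scope.

Lemma omega_ge0 (r : R) (p : seq T) : (2 <= r)%R -> (0 <= omega r p)%R.
Proof.
move=> r2; have Lr : (0 <= ln r)%R by apply: ln_ge0; lra.
have : (0 <= ((plen p)%:R - 1) ^+ 2 * ln r)%R by apply: mulr_ge0 => //; exact: sqr_ge0.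
rewrite /omega; lra.
Qed.

Lemma pair_bound pi Q pit Qt W f r x y : rev_generator pi Q -> rev_generator pit Qt ->
  is_flow pit Q Qt W -> (forall z, 0 < f z)%R -> regular Q r f -> (2 <= r)%R ->
  (pit x * Qt x y * phi (f x) (f y))%:E <=
  \sum_(e : T * T) (C0 * phi (f e.1) (f e.2))%:E *
     \esum_(p in [set p | (0 < Qt x y)%R /\ isPath Q x y p /\ edge_in e.1 e.2 p])
        (W p * omega r p)%:E.
Proof.
move=> hg hgt [hW1 hW2] f0 hreg r2.
have hWP : forall x' y' p, (0 < Qt x' y')%R -> isPath Q x' y' p -> (0 <= W p)%R.
  by move=> x' y' p hq hp; have /andP[] := hW1 p (ex_intro _ x' (ex_intro _ y' (conj hq hp))).
have C00 : (0 <= C0 :> R)%R.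
  by rewrite /C0; apply: addr_ge0; [lra|apply: divr_ge0; [lra|exact: (ltW (ln2_gt0 R))]].
have hR : 0 <= \sum_(e : T * T) (C0 * phi (f e.1) (f e.2))%:E *
     \esum_(p in [set p | (0 < Qt x y)%R /\ isPath Q x y p /\ edge_in e.1 e.2 p])
        (W p * omega r p)%:E.
  apply: sume_ge0 => e _; apply: mule_ge0.
    by rewrite lee_fin; apply: mulr_ge0 => //; apply: phi_ge0.
  apply: esum_ge0 => p [hq [hp _]]; rewrite lee_fin; apply: mulr_ge0.
    exact: hWP hq hp.
  exact: omega_ge0.
case: (ltP 0%R (Qt x y)) hR => hQ hR; last first.
  apply: (le_trans _ hR); rewrite lee_fin.
  case: (eqVneq x y) => [->|xy]; first by rewrite phi_diag mulr0.
  case: hgt => _ _ Qge0 _ _.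
  have -> : Qt x y = 0%R by apply/eqP; rewrite eq_le hQ Qge0.
  by rewrite mulr0 mul0r.
have xy : x != y.
  by apply/eqP => E; move: hQ; rewrite E => /lt_le_trans/(_ (Qdiag_le0 y hgt)); rewrite ltxx.
have hP := hW2 x y hQ.
set P := [set p : seq T | isPath Q x y p] in hP.
have hW : forall p, P p -> (0 <= W p)%R by move=> p; exact: hWP hQ.
have -> : (pit x * Qt x y * phi (f x) (f y))%:E = (phi (f x) (f y))%:E * (pit x * Qt x y)%:E.
  by rewrite -EFinM mulrC.
rewrite -hP -esumZ; last by move=> p /hW; rewrite lee_fin.
  2: by apply: phi_ge0.
set F := fun p e => if edge_in e.1 e.2 p then (C0 * phi (f e.1) (f e.2))%:E * (W p * omega r p)%:E else 0.
have hF0 : forall p e, P p -> 0 <= F p e.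
  move=> p e Pp; rewrite /F; case: ifP => // _; apply: mule_ge0; rewrite lee_fin.
    by apply: mulr_ge0 => //; apply: phi_ge0.
  by apply: mulr_ge0; [exact: hW|exact: omega_ge0].
apply: (@le_trans _ _ (\esum_(p in P) \sum_(e : T * T) F p e)).
  apply: le_esum => p Pp.
  have -> : \sum_(e : T * T) F p e = (W p * (C0 * omega r p * Epath f p))%:E.
    rewrite /Epath mulr_sumr mulr_sumr -sumEFin [RHS]big_mkcond /F.
    apply: eq_bigr => e _.
    by case: ifP => _ //; rewrite -EFinM; congr (_%:E); ring.
  rewrite -EFinM lee_fin mulrC; apply: ler_wpM2l; first exact: hW.
  exact: path_bound hg f0 hreg r2 Pp xy.
rewrite esum_sum; last by move=> p e Pp _; apply: hF0.
apply: lee_sum => e _.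
rewrite /F.
have -> : \esum_(p in P) (if edge_in e.1 e.2 p then (C0 * phi (f e.1) (f e.2))%:E * (W p * omega r p)%:E else 0)
  = (C0 * phi (f e.1) (f e.2))%:E * \esum_(p in P) (if edge_in e.1 e.2 p then (W p * omega r p)%:E else 0).
  rewrite -esumZ.
  - by apply: eq_esum => p _; case: ifP => // _; rewrite mule0.
  - by apply: mulr_ge0 => //; apply: phi_ge0.
  - move=> p Pp; case: ifP => // _; rewrite lee_fin.
    by apply: mulr_ge0; [exact: hW|exact: omega_ge0].
apply: lee_wpmul2l.
  by rewrite lee_fin; apply: mulr_ge0 => //; apply: phi_ge0.
have -> : [set p | true /\ isPath Q x y p /\ edge_in e.1 e.2 p] =
    P `&` [set p | edge_in e.1 e.2 p].
  by apply/seteqP; split => p /=; [case=> _ [] | case=> ? ?].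
rewrite esum_mkcondr; apply: le_esum => p _.
suff -> : (p \in [set p | edge_in e.1 e.2 p]) = edge_in e.1 e.2 p by [].
by apply/idP/idP => [/set_mem|/mem_set].
Qed.

End PairBound.

Section DirCompare.
Variables (R : realType) (T : finType).
Implicit Types (pi f : T -> R) (Q : T -> T -> R).
Local Open Scope ereal_scope.

Lemma D2_compare pi Q pit Qt W f r A : rev_generator pi Q -> rev_generator pit Qt ->
  is_flow pit Q Qt W -> (forall z, 0 < f z)%R -> regular Q r f -> (2 <= r)%R ->
  Aflow pi Q Qt W r = A%:E ->
  (D2 pit Qt f)%:E <= (C0 * A * D2 pi Q f)%:E.
Proof.
move=> hg hgt hfl f0 hreg r2 hA.
have [hW1 hW2] := hfl.
have C00 : (0 <= C0 :> R)%R.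
  by rewrite /C0; apply: addr_ge0; [lra|apply: divr_ge0; [lra|exact: (ltW (ln2_gt0 R))]].
have hGe0 : forall p, Gamma Q Qt p -> 0 <= (W p * omega r p)%:E.
  move=> p hp; rewrite lee_fin; apply: mulr_ge0; last exact: omega_ge0.
  by have /andP[] := hW1 p hp.
rewrite /D2 -sumEFin.
have H := fun q : T * T => pair_bound q.1 q.2 hg hgt hfl f0 hreg r2.
apply: le_trans; first by apply: lee_sum => q _; exact: H q.
rewrite exchange_big /=.
rewrite /D2 mulr_sumr -sumEFin; apply: lee_sum => -[u v] _ /=.
rewrite -ge0_sume_distrr; last by move=> q _; apply: esum_ge0 => p [hq [hp _]]; apply: hGe0; exists q.1, q.2.
have ce0 : (0 <= C0 * phi (f u) (f v))%R by apply: mulr_ge0 => //; apply: phi_ge0.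
apply: (@le_trans _ _ ((C0 * phi (f u) (f v))%:E *
   \esum_(p in [set p | Gamma Q Qt p /\ edge_in u v p]) (W p * omega r p)%:E)).
  apply: lee_wpmul2l; first by rewrite lee_fin.
  apply: disj_sum.
  - by move=> q p /= [hq [hp he]]; split => //; exists q.1, q.2.
  - move=> p [x y] [x' y'] /= [_ [hp _]] [_ [hp' _]].
    by have [-> ->] := isPath_uniq hp hp'.
  - by move=> p [hp _]; apply: hGe0.
case: (eqVneq u v) => [<-|uv].
  by rewrite phi_diag !mulr0 mul0e.
case: (ltP 0%R (Q u v)) => hQ.
  have pi0 : forall z, (0 < pi z)%R by case: hg.
  apply: le_trans (lee_wpmul2l _ (edge_bound uv hQ pi0 hA)) _.
    by rewrite lee_fin.
  rewrite -EFinM lee_fin le_eqVlt; apply/orP; left; apply/eqP; ring.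
have hQ0 : Q u v = 0%R.
  by case: hg => _ _ Qge0 _ _; apply/eqP; rewrite eq_le hQ Qge0.
rewrite esum1; first by rewrite mule0 hQ0 mulr0 mul0r mulr0.
move=> p [[x [y [_ hp]]] he]; have := isPath_pos hp he.
by rewrite hQ0 ltxx.
Qed.

End DirCompare.

Section Main.
Variables (R : realType) (T : finType).
Local Open Scope ereal_scope.

Lemma alpha_le (pi : T -> R) Q r (al : R) : MLSI_reg pi Q r al -> alpha_reg pi Q r <= al%:E.
Proof. by move=> h; apply: ereal_inf_lbound; exists al. Qed.

Lemma C0_gt0 : (0 < C0 :> R)%R.
Proof.
by rewrite /C0; apply: ltr_wpDr; [apply: divr_ge0; [lra|exact: (ltW (ln2_gt0 R))]|lra].
Qed.

End Main.

Unset Implicit Arguments.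

Theorem theorem2 (R : realType) :
  exists C : R, 0 < C /\
  forall (T : finType) (pi : T -> R) (Q : T -> T -> R)
         (pit : T -> R) (Qt : T -> T -> R) (W : seq T -> R) (a alt : R),
    rev_generator pi Q -> rev_generator pit Qt ->
    is_flow pit Q Qt W ->
    0 < a -> (forall w, pi w <= a * pit w) ->
    MLSI pit Qt alt ->
    forall r : R, 2 <= r ->
      (alpha_reg pi Q r <= (C * a)%:E * Aflow pi Q Qt W r * alt%:E)%E.
Proof.
exists C0; split; first exact: C0_gt0.
move=> T pi Q pit Qt W a alt hg hgt hfl a0 hpa hM r r2.
have hg' := hg; have hgt' := hgt.
case: hg' => pi0 s1 Qge0 _ _; case: hgt' => pit0 st1 Qtge0 _ _.
have hent : forall f : T -> R, (forall z, 0 < f z) -> Ent pi f <= a * Ent pit f.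
  by move=> f f0; apply: ent_compare.
case: (pickP (fun e : T * T => (e.1 != e.2) && (0 < Q e.1 e.2))) => [e0 /andP[e0n e0p]|noedge].
  have Dt0 : forall f : T -> R, (forall z, 0 < f z) -> 0 <= Dir pit Qt f.
    move=> f f0; rewrite Dir_D2; apply: mulr_ge0; first by rewrite invr_ge0.
    exact: D2_ge0.
  have alt0 : 0 < alt.
    have [f [f0 hf]] := ent_pos pit0 st1 e0n.
    rewrite ltNge; apply/negP => halt.
    have := hM f f0; have := mulr_le0_ge0 halt (Dt0 f f0); lra.
  have hA0 : (0 <= Aflow pi Q Qt W r)%E.
    have := @le_bigmax_cond _ _ _ (-oo)%E e0
      (fun e : T * T => (e.1 != e.2) && (0 < Q e.1 e.2))
      (fun e : T * T => ((pi e.1 * Q e.1 e.2)^-1%:E *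
        \esum_(p in [set p | Gamma Q Qt p /\ edge_in e.1 e.2 p])
         (W p * (1 + ((plen p)%:R - 1) ^+ 2 * ln r))%:E)%E).
    rewrite /= e0n e0p => /(_ erefl); rewrite -/(Aflow pi Q Qt W r).
    apply: le_trans; apply: mule_ge0.
      by rewrite lee_fin invr_ge0; apply: mulr_ge0; [exact: ltW|exact: ltW].
    apply: esum_ge0 => p [hp _]; rewrite lee_fin; apply: mulr_ge0.
      by have /andP[] := hfl.1 p hp.
    exact: (omega_ge0 p r2).
  case hAeq: (Aflow pi Q Qt W r) hA0 => [A| |] hA0.
  - apply: (@le_trans _ _ (C0 * a * A * alt)%:E); last first.
      by rewrite !EFinM.
    apply: alpha_le => f f0 hreg.
    have hD := D2_compare hg hgt hfl f0 hreg r2 hAeq; rewrite lee_fin in hD.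
    apply: le_trans (hent f f0) _.
    have := hM f f0; rewrite !Dir_D2 => h.
    apply: le_trans (ler_wpM2l (ltW a0) h) _.
    have h2 : alt * (2^-1 * D2 pit Qt f) <= alt * (2^-1 * (C0 * A * D2 pi Q f)).
      apply: ler_wpM2l; first exact: ltW.
      by apply: ler_wpM2l => //; rewrite invr_ge0.
    apply: le_trans (ler_wpM2l (ltW a0) h2) _.
    rewrite le_eqVlt; apply/orP; left; apply/eqP; ring.
  - rewrite mulry gtr0_sg ?mul1e ?mulyr ?gtr0_sg ?mul1e ?leey //.
    exact: mulr_gt0 (C0_gt0 R) a0.
  - by [].
have hQ0 : forall x y, x != y -> Q x y = 0.
  move=> x y xy; have := noedge (x, y); rewrite /= xy /= => /negbT.
  by rewrite -leNgt => h; apply/eqP; rewrite eq_le h Qge0.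
have hQt0 : forall x y, x != y -> Qt x y = 0.
  move=> x y xy; apply/eqP; rewrite eq_le Qtge0 // andbT leNgt; apply/negP => hq.
  have := hfl.2 x y hq; rewrite esum1.
    move=> /esym/eqP; rewrite eqe mulf_eq0 (gt_eqF (pit0 x)) (gt_eqF hq) //.
  move=> p hp; case: p hp => [|x0 [|b t]] hp; first by [].
    by move: hp; rewrite /=; case: (x0 == x).
  have he : edge_in x0 b [:: x0, b & t] by rewrite /edge_in /= inE eqxx.
  have hx : 0 < Q x0 b := isPath_pos hp he.
  have := noedge (x0, b); rewrite /= hx andbT => /negbT; rewrite negbK => /eqP E.
  by move: hx; rewrite E => /lt_le_trans/(_ (Qdiag_le0 b hg)); rewrite ltxx.
have hall : forall al : R, (alpha_reg pi Q r <= al%:E)%E.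
  move=> al; apply: alpha_le => f f0 _.
  rewrite Dir_D2 D2_zero // mulr0 mulr0.
  apply: le_trans (hent f f0) _.
  have := hM f f0; rewrite Dir_D2 D2_zero // mulr0 mulr0 => h.
  by rewrite pmulr_rle0.
case E: (alpha_reg pi Q r) hall => [x| |] hall.
- by have := hall (x - 1)%R; rewrite lee_fin => h; exfalso; lra.
- by have := hall 0%R.
- by rewrite leNye.
Qed.
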